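(* Let $a,d$ be real numbers and let $T_n(t,\alpha,\delta)$ denote the general Eulerian polynomials defined below. Then for every integer $n\ge 0$ and every complex $t$ with $|t|<1$ (equivalently, as an identity of formal power series in $t$), $$-\frac{T_n(t,a-d,-d)}{(t-1)^{n+1}}=\sum_{j=0}^{\infty}t^j(a+jd)^n.$$
   Context: For real numbers $\alpha,\delta$, the general Eulerian numbers $A_{n,k}(\alpha,\delta)$ (integers $n\ge 0$, $k$) are defined by $A_{0,-1}(\alpha,\delta)=1$, $A_{n,k}(\alpha,\delta)=0$ whenever $k\ge n$ or $k\le -2$, and for $n\ge 1$, $-1\le k\le n-1$: $$A_{n,k}(\alpha,\delta)=(-\alpha+(k+2)\delta)A_{n-1,k}(\alpha,\delta)+(\alpha+(n-k-1)\delta)A_{n-1,k-1}(\alpha,\delta).$$ The general Eulerian polynomials are $T_n(t,\alpha,\delta)=\sum_{k=-1}^{n-1}A_{n,k}(\alpha,\delta)t^{k+1}$ (so $T_0=1$). In the claim, $T_n(t,a-d,-d)$ is this polynomial with $\alpha=a-d$, $\delta=-d$. Also $x^0=1$ for all $x$. *)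

(* Defs.v *)
From Stdlib Require Import Reals ZArith.
From Coquelicot Require Import Coquelicot.
Open Scope R_scope.

Fixpoint genEulerA (al de : R) (n : nat) (k : Z) : R :=
  match n with
  | O => if Z.eqb k (-1)%Z then 1 else 0
  | S n' =>
      if orb (Z.ltb k (-1)%Z) (Z.leb (Z.of_nat n) k) then 0
      else (- al + (IZR k + 2) * de) * genEulerA al de n' k
           + (al + (INR n - IZR k - 1) * de) * genEulerA al de n' (k - 1)%Z
  end.

(* T_n(t,alpha,delta) = sum_{k=-1}^{n-1} A_{n,k} t^{k+1}
   = sum_{m=0}^{n} A_{n,m-1} t^m, evaluated at complex t. *)
Definition genEulerT (n : nat) (t : C) (al de : R) : C :=
  sum_n (fun m => (RtoC (genEulerA al de n (Z.of_nat m - 1)%Z) * Cpow t m)%C) n.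

(* Main.v *)
Require Import Defs.
From Stdlib Require Import Reals ZArith Lia Lra FunctionalExtensionality.
From Coquelicot Require Import Coquelicot.
Open Scope R_scope.

Definition sh (x : nat -> R) (j : nat) : R := match j with O => 0 | S j' => x j' end.
Definition dlt (x : nat -> R) (j : nat) : R := x j - sh x j.
Definition iterD (k : nat) (x : nat -> R) := Nat.iter k dlt x.
Definition Mop (a d : R) (x : nat -> R) (j : nat) := (a + INR j * d) * x j.
Definition cseq (a d : R) (n : nat) (j : nat) := (a + INR j * d) ^ n.
Definition Dseq (a d : R) (n : nat) := iterD (S n) (cseq a d n).

Lemma dlt_M a d x : dlt (Mop a d x) = fun j => Mop a d (dlt x) j + d * sh x j.
Proof.
  apply functional_extensionality; intros [|j]; unfold dlt, Mop, sh; cbv beta iota.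
  - ring.
  - rewrite S_INR. ring.
Qed.

Lemma dlt_sh x : dlt (sh x) = sh (dlt x).
Proof. apply functional_extensionality; intros [|j]; unfold dlt, sh; simpl; try ring.
Qed.

Lemma dlt_lin x y c : dlt (fun j => x j + c * y j) = fun j => dlt x j + c * dlt y j.
Proof. apply functional_extensionality; intros [|j]; unfold dlt, sh; ring. Qed.

Lemma iterD_M a d x k :
  iterD (S k) (Mop a d x) = fun j => Mop a d (iterD (S k) x) j + INR (S k) * d * sh (iterD k x) j.
Proof.
  induction k.
  - simpl. unfold iterD; simpl. rewrite dlt_M. apply functional_extensionality; intros; ring.
  - change (iterD (S (S k)) (Mop a d x)) with (dlt (iterD (S k) (Mop a d x))).
    rewrite IHk.
    rewrite (dlt_lin (Mop a d (iterD (S k) x)) (sh (iterD k x)) (INR (S k) * d)).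
    rewrite dlt_M, dlt_sh.
    change (dlt (iterD k x)) with (iterD (S k) x).
    change (dlt (iterD (S k) x)) with (iterD (S (S k)) x).
    apply functional_extensionality; intros j. rewrite (S_INR (S k)). ring.
Qed.

Lemma Dseq_S a d n m :
  Dseq a d (S n) m = (a + INR m * d) * Dseq a d n m
     + (- (a + INR m * d) + INR (S (S n)) * d) * sh (Dseq a d n) m.
Proof.
  unfold Dseq.
  replace (cseq a d (S n)) with (Mop a d (cseq a d n)).
  2:{ apply functional_extensionality; intros; unfold Mop, cseq; simpl; ring. }
  rewrite iterD_M.
  change (iterD (S (S n)) (cseq a d n)) with (dlt (iterD (S n) (cseq a d n))).
  unfold Mop, dlt. ring.
Qed.

Lemma genEulerA_S al de n k : genEulerA al de (S n) k =
  if orb (Z.ltb k (-1)%Z) (Z.leb (Z.of_nat (S n)) k) then 0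
  else (- al + (IZR k + 2) * de) * genEulerA al de n k
       + (al + (INR (S n) - IZR k - 1) * de) * genEulerA al de n (k - 1)%Z.
Proof. reflexivity. Qed.

Lemma genEulerA_0 al de k : genEulerA al de 0 k = if Z.eqb k (-1) then 1 else 0.
Proof. reflexivity. Qed.

Lemma genEulerA_out al de n k : (k < -1 \/ Z.of_nat n <= k)%Z -> genEulerA al de n k = 0.
Proof.
  intros H. destruct n.
  - simpl. destruct (Z.eqb_spec k (-1)); [simpl in H; lia| reflexivity].
  - rewrite genEulerA_S.
    destruct H as [H|H].
    + apply Z.ltb_lt in H. rewrite H. reflexivity.
    + apply Z.leb_le in H. rewrite H, Bool.orb_true_r. reflexivity.
Qed.

Lemma Dseq_A a d n m : Dseq a d n m = (-1) ^ n * genEulerA (a - d) (- d) n (Z.of_nat m - 1).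
Proof.
  revert m. induction n; intros m.
  - unfold Dseq, iterD; simpl Nat.iter. unfold dlt, cseq, sh. destruct m.
    + simpl. ring.
    + destruct (Z.eqb_spec (Z.of_nat (S m) - 1) (-1)); [lia|]. rewrite genEulerA_0.
      rewrite (proj2 (Z.eqb_neq _ _) n). simpl. ring.
  - rewrite Dseq_S, IHn. destruct m as [|m].
    + simpl sh. rewrite genEulerA_S.
      replace (Z.of_nat 0 - 1)%Z with (-1)%Z by reflexivity.
      destruct (Z.ltb_spec (-1) (-1)); [lia|].
      destruct (Z.leb_spec (Z.of_nat (S n)) (-1)); [lia|]. simpl orb.
      rewrite (genEulerA_out _ _ n (-1 - 1)) by lia.
      replace (IZR (-1)) with (-1) by reflexivity.
      replace (INR 0) with 0 by reflexivity. change ((-1)^(S n)) with (-1 * (-1)^n). ring.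
    + simpl sh. rewrite IHn.
      replace (Z.of_nat (S m) - 1)%Z with (Z.of_nat m) by lia.
      rewrite genEulerA_S.
      destruct (Z.ltb_spec (Z.of_nat m) (-1)); [lia|].
      destruct (Z.leb_spec (Z.of_nat (S n)) (Z.of_nat m)).
      * simpl orb. rewrite (genEulerA_out _ _ n (Z.of_nat m)) by lia.
        rewrite (genEulerA_out _ _ n (Z.of_nat m - 1)) by lia. ring.
      * simpl orb. rewrite <- INR_IZR_INZ.
        rewrite !S_INR. change ((-1)^(S n)) with (-1 * (-1)^n). ring.
Qed.

Lemma lim_inv1 : is_lim_seq (fun j => / (INR j + 1)) 0.
Proof.
  pose proof (is_lim_seq_inv _ _ is_lim_seq_INR) as H.
  assert (H0 : (p_infty : Rbar) <> 0) by discriminate.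
  specialize (H H0). apply is_lim_seq_incr_1 in H.
  apply is_lim_seq_ext with (u := fun n => / INR (S n)); [intros j; rewrite S_INR; reflexivity | exact H].
Qed.

Lemma lim_q n : is_lim_seq (fun j => ((INR j + 2) / (INR j + 1)) ^ n) 1.
Proof.
  assert (Hq : is_lim_seq (fun j => (INR j + 2) / (INR j + 1)) 1).
  { replace 1 with (1 + 0) by ring.
    eapply is_lim_seq_ext; [|apply (is_lim_seq_plus' _ _ _ _ (is_lim_seq_const 1) lim_inv1)].
    intros j. simpl. pose proof (pos_INR j). field. lra. }
  induction n.
  - simpl. apply is_lim_seq_const.
  - replace (Finite 1) with (Finite (1 * 1)) by (f_equal; ring). simpl. apply is_lim_seq_mult'; auto.
Qed.

Lemma ex_geom_poly r n : 0 < r < 1 -> ex_series (fun j => r ^ j * (INR j + 1) ^ n).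
Proof.
  intros Hr.
  assert (Hpos : forall j, 0 < r ^ j * (INR j + 1) ^ n).
  { intros j. pose proof (pos_INR j). apply Rmult_lt_0_compat; apply pow_lt; lra. }
  assert (H := ex_series_DAlembert (fun j => r ^ j * (INR j + 1) ^ n) r (proj2 Hr)
     (fun j => Rgt_not_eq _ _ (Hpos j))).
  eapply ex_series_ext; [|apply H].
  - intros j. simpl. apply Rabs_pos_eq. apply Rlt_le, Hpos.
  - replace r with (r * 1) at 1 by ring.
    eapply is_lim_seq_ext; [|apply (is_lim_seq_scal_l _ r _ (lim_q n))].
    intros j. pose proof (pos_INR j).
    rewrite Rabs_pos_eq.
    2:{ apply Rlt_le, Rdiv_lt_0_compat; apply Hpos. }
    rewrite S_INR. unfold Rdiv. rewrite Rpow_mult_distr, pow_inv.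
    simpl pow. replace (INR j + 1 + 1) with (INR j + 2) by ring. field. split; apply pow_nonzero; lra.
Qed.

Lemma ex_main (a d : R) (n : nat) (t : C) : Cmod t < 1 ->
  ex_series (fun j : nat => (Cpow t j * RtoC ((a + INR j * d) ^ n))%C).
Proof.
  intros Ht. set (r := (1 + Cmod t) / 2). pose proof (Cmod_ge_0 t) as Ht0.
  assert (Hr : 0 < r < 1) by (unfold r; lra).
  set (B := (Rabs a + Rabs d) ^ n).
  apply (@ex_series_le C_AbsRing C_CompleteNormedModule _ (fun j => B * (r ^ j * (INR j + 1) ^ n))).
  2:{ pose proof (@ex_series_scal_l R_AbsRing R_NormedModule B _ (ex_geom_poly r n Hr)) as E.
       eapply ex_series_ext; [|exact E]. intros; reflexivity. }
  intros j. change (norm ?x) with (Cmod x). rewrite Cmod_mult, Cmod_pow, Cmod_R.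
  rewrite <- RPow_abs.
  unfold B. pose proof (pos_INR j).
  replace ((Rabs a + Rabs d) ^ n * (r ^ j * (INR j + 1) ^ n))
    with (r ^ j * ((Rabs a + Rabs d) * (INR j + 1)) ^ n) by (rewrite Rpow_mult_distr; ring).
  apply Rmult_le_compat.
  - apply pow_le; lra.
  - apply pow_le, Rabs_pos.
  - apply pow_incr. unfold r; lra.
  - apply pow_incr. split; [apply Rabs_pos|].
    eapply Rle_trans; [apply Rabs_triang|]. rewrite Rabs_mult, (Rabs_pos_eq (INR j)) by lra.
    pose proof (Rabs_pos a); pose proof (Rabs_pos d). nra.
Qed.

Lemma diff_series (t : C) x L :
  is_series (fun j => (Cpow t j * RtoC (x j))%C) L ->
  is_series (fun j => (Cpow t j * RtoC (dlt x j))%C) ((1 - t) * L)%C.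
Proof.
  intros H.
  set (u := fun j => (Cpow t j * RtoC (x j))%C) in *.
  set (v := fun j => match j with O => RtoC 0 | S j' => u j' end).
  assert (Hv : is_series v L).
  { apply is_series_decr_1.
    match goal with |- is_series _ ?l => replace l with L end.
    - exact H.
    - change (L = (L + - RtoC 0)%C). apply injective_projections; simpl; ring. }
  pose proof (is_series_minus _ _ _ _ H (is_series_scal t _ _ Hv)) as H2.
  eapply is_series_ext; [|].
  2:{ replace ((1 - t) * L)%C with (plus L (opp (scal t L))). exact H2.
      change ((L + - (t * L)) = (1 - t) * L)%C. ring. }
  intros [|j]; change (plus ?a (opp (scal t ?b))) with (a + - (t * b))%C;
    unfold v, u, dlt, sh; simpl Cpow;
    match goal with |- ?a = ?b => change (@eq C a b) end.
  - rewrite Rminus_0_r. ring.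
  - rewrite RtoC_minus. ring.
Qed.

Lemma iter_series (t : C) c (L : C) k :
  is_series (fun j => (Cpow t j * RtoC (c j))%C) L ->
  is_series (fun j => (Cpow t j * RtoC (iterD k c j))%C) (Cpow (1 - t) k * L)%C.
Proof.
  intros H. induction k.
  - simpl. replace (1 * L)%C with L by ring. exact H.
  - change (iterD (S k) c) with (dlt (iterD k c)).
    replace (Cpow (1 - t) (S k) * L)%C with ((1 - t) * (Cpow (1 - t) k * L))%C
      by (simpl; ring).
    apply diff_series, IHk.
Qed.

Lemma sum_n_const_tail (u : nat -> C) n N : (n <= N)%nat ->
  (forall m, (n < m)%nat -> u m = RtoC 0) -> @eq C (sum_n u N) (sum_n u n).
Proof.
  intros HN Hz. induction HN; auto.
  rewrite sum_Sn, Hz by lia. rewrite IHHN.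
  change (plus (sum_n u n) (RtoC 0)) with (sum_n u n + RtoC 0)%C. ring.
Qed.

Lemma finite_series (u : nat -> C) n :
  (forall m, (n < m)%nat -> u m = RtoC 0) -> is_series u (sum_n u n).
Proof.
  intros Hz. unfold is_series.
  apply (filterlim_ext_loc (fun _ => sum_n u n)).
  - exists n. intros N HN. symmetry. apply sum_n_const_tail; auto.
  - apply filterlim_const.
Qed.

Lemma Cpow_neg t k : Cpow (t - 1) k = (RtoC ((-1) ^ k) * Cpow (1 - t) k)%C.
Proof.
  induction k; simpl.
  - ring.
  - rewrite IHk, RtoC_mult. ring.
Qed.

Lemma m1sq k : (-1) ^ k * (-1) ^ k = 1.
Proof. induction k; simpl; [ring|]. replace (-1 * (-1) ^ k * (-1 * (-1) ^ k)) with ((-1) ^ k * (-1) ^ k) by ring. exact IHk. Qed.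

Lemma Cpow_nz (x : C) k : x <> RtoC 0 -> Cpow x k <> RtoC 0.
Proof.
  intros Hx. apply Cmod_gt_0. rewrite Cmod_pow. apply pow_lt. apply Cmod_gt_0. exact Hx.
Qed.

Lemma final_alg (L T P e : C) : P <> RtoC 0 -> e <> RtoC 0 -> T = (e * (P * L))%C ->
  L = (- (T / (- e * P)))%C.
Proof. intros HP He HT. rewrite HT. field. split; assumption. Qed.

Theorem proposition3p4 (a d : R) (n : nat) (t : C) :
  Cmod t < 1 ->
  is_series (fun j : nat => (Cpow t j * RtoC ((a + INR j * d) ^ n))%C)
            (- (genEulerT n t (a - d) (- d) / Cpow (t - 1) (S n)))%C.
Proof.
  intros Ht. destruct (ex_main a d n t Ht) as [L HL].
  pose proof (iter_series t (cseq a d n) L (S n) HL) as H1.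
  change (iterD (S n) (cseq a d n)) with (Dseq a d n) in H1.
  set (u := fun j => (Cpow t j * RtoC (Dseq a d n j))%C) in H1.
  assert (H2 : is_series u (sum_n u n)).
  { apply finite_series. intros m Hm. unfold u. rewrite Dseq_A, genEulerA_out by lia.
    rewrite Rmult_0_r. apply Cmult_0_r. }
  assert (E1 : (Cpow (1 - t) (S n) * L)%C = sum_n u n).
  { exact (@filterlim_locally_unique nat C_AbsRing C_NormedModule eventually
      (Proper_StrongProper _ eventually_filter) (sum_n u) _ _ H1 H2). }
  set (e := RtoC ((-1) ^ n)).
  assert (E2 : sum_n u n = (e * genEulerT n t (a - d) (- d))%C).
  { unfold genEulerT. rewrite <- (sum_n_mult_l (K := C_Ring)). apply sum_n_ext. intros m.
    unfold u. rewrite Dseq_A, RtoC_mult. change (mult ?x ?y) with (x * y)%C. unfold e.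
    generalize (Cpow t m). intros z.
    match goal with |- ?x = ?y => change (@eq C x y) end. ring. }
  rewrite E2 in E1. clear E2 H1 H2.
  set (T := genEulerT n t (a - d) (- d)) in *.
  set (P := Cpow (1 - t) (S n)) in *.
  assert (He : (e * e)%C = RtoC 1) by (unfold e; rewrite <- RtoC_mult, m1sq; reflexivity).
  assert (Hnz1 : (1 - t)%C <> RtoC 0).
  { intros Hc. assert (t = RtoC 1).
    { pose proof (f_equal fst Hc) as F1; pose proof (f_equal snd Hc) as F2.
      simpl in F1, F2. apply injective_projections; simpl; lra. }
    subst t. rewrite Cmod_1 in Ht. lra. }
  assert (HP : P <> RtoC 0) by (apply Cpow_nz, Hnz1).
  assert (He0 : e <> RtoC 0).
  { intros Hc. rewrite Hc in He. apply (f_equal fst) in He. simpl in He. lra. }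
  assert (HT : T = (e * (P * L))%C).
  { rewrite E1, Cmult_assoc, He. ring. }
  rewrite Cpow_neg.
  replace (RtoC ((-1) ^ S n)) with (- e)%C by (unfold e; simpl pow; rewrite RtoC_mult; apply injective_projections; simpl; ring).
  fold P. replace (- (T / (- e * P)))%C with L. exact HL.
  apply final_alg; assumption.
Qed.
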